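(* Let $P$ be an $n\times n$ doubly stochastic matrix all of whose diagonal entries are positive. If $P$ is SIA, then $P$ is a Sarymsakov matrix (i.e., $P\in\mathcal S_1$).
   Context: $\mathcal N=\{1,\ldots,n\}$. A matrix is stochastic if it is entrywise nonnegative with row sums $1$, and doubly stochastic if in addition its column sums are $1$. A stochastic $P$ is SIA if $\lim_{m\to\infty}P^m=\mathbf 1c^T$ for some nonnegative $c$ with entries summing to $1$. For stochastic $P$ and $\mathcal A\subseteq\mathcal N$, $F_P(\mathcal A)=\{j:\ p_{ij}>0\text{ for some } i\in\mathcal A\}$. A Sarymsakov matrix is a stochastic $P$ such that for any disjoint nonempty $\mathcal A,\tilde{\mathcal A}\subseteq\mathcal N$, either $F_P(\mathcal A)\cap F_P(\tilde{\mathcal A})\neq\emptyset$, or $F_P(\mathcal A)\cap F_P(\tilde{\mathcal A})=\emptyset$ and $|F_P(\mathcal A)\cup F_P(\tilde{\mathcal A})|>|\mathcal A\cup\tilde{\mathcal A}|$. *)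

(* Defs.v *)
From Stdlib Require Import Reals.
From mathcomp Require Import all_boot.
Set Implicit Arguments. Unset Strict Implicit. Unset Printing Implicit Defensive.

(* n x n real matrices, indexed by 'I_n (0-based; corresponds to N={1..n}). *)
Definition rmat (n : nat) := 'I_n -> 'I_n -> R.

Definition rsum (n : nat) (f : 'I_n -> R) : R := \big[Rplus/R0]_(k < n) f k.

Definition rmul (n : nat) (A B : rmat n) : rmat n :=
  fun i j => rsum (fun k => Rmult (A i k) (B k j)).

Definition rid (n : nat) : rmat n := fun i j => if i == j then R1 else R0.

Fixpoint rpow (n : nat) (P : rmat n) (m : nat) : rmat n :=
  match m with
  | O => @rid n
  | S m' => rmul (rpow P m') P
  end.

Definition stochastic (n : nat) (P : rmat n) : Prop :=
  (forall i j, Rle R0 (P i j)) /\ (forall i, rsum (fun j => P i j) = R1).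

Definition doubly_stochastic (n : nat) (P : rmat n) : Prop :=
  stochastic P /\ (forall j, rsum (fun i => P i j) = R1).

Definition SIA (n : nat) (P : rmat n) : Prop :=
  stochastic P /\
  exists c : 'I_n -> R,
    (forall j, Rle R0 (c j)) /\ rsum c = R1 /\
    (forall i j, Un_cv (fun m => rpow P m i j) (c j)).

Definition FP (n : nat) (P : rmat n) (A : {set 'I_n}) : {set 'I_n} :=
  [set j | [exists i in A, Rlt_dec R0 (P i j)]].

Definition sarymsakov (n : nat) (P : rmat n) : Prop :=
  stochastic P /\
  forall A A' : {set 'I_n},
    A != set0 -> A' != set0 -> [disjoint A & A'] ->
    (FP P A :&: FP P A' != set0) \/
    (FP P A :&: FP P A' = set0 /\ #|A :|: A'| < #|FP P A :|: FP P A'|).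

(* Main.v *)
Require Import Defs.
From Stdlib Require Import Reals Lra.
From mathcomp Require Import all_boot zify.

Lemma rsum0 (n : nat) (f : 'I_n -> R) : (forall k, f k = R0) -> rsum f = R0.
Proof.
move=> H; rewrite /rsum; apply: (big_ind (fun x => x = R0)) => //.
by move=> x y -> ->; rewrite Rplus_0_r.
Qed.

Lemma closed_pow (n : nat) (P : rmat n) (A : {set 'I_n}) :
  (forall i j, i \in A -> j \notin A -> P i j = R0) ->
  forall m i j, i \in A -> j \notin A -> rpow P m i j = R0.
Proof.
move=> HP; elim=> [|m IH] i j Hi Hj /=.
  rewrite /rid; case: eqP => // E; by rewrite -E Hi in Hj.
rewrite /rmul; apply: rsum0 => k.
case Hk: (k \in A).
  by rewrite (HP k j Hk Hj) Rmult_0_r.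
by rewrite (IH i k Hi (negbT Hk)) Rmult_0_l.
Qed.

Lemma sub_FP (n : nat) (P : rmat n) (A : {set 'I_n}) :
  (forall i, Rlt R0 (P i i)) -> A \subset FP P A.
Proof.
move=> Hd; apply/subsetP => x Hx; rewrite inE; apply/existsP; exists x.
rewrite Hx /=; by case: Rlt_dec => // /(_ (Hd x)).
Qed.

Lemma FP_fix (n : nat) (P : rmat n) (A : {set 'I_n}) :
  stochastic P -> FP P A = A ->
  forall i j, i \in A -> j \notin A -> P i j = R0.
Proof.
move=> [Hnn _] E i j Hi Hj.
case: (Rle_lt_or_eq_dec _ _ (Hnn i j)) => // Hlt.
exfalso; move: Hj; rewrite -E inE; move/negP; apply.
apply/existsP; exists i; rewrite Hi /=; by case: Rlt_dec.
Qed.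

Lemma c_zero (n : nat) (P : rmat n) (A : {set 'I_n}) (c : 'I_n -> R) :
  stochastic P -> FP P A = A -> A != set0 ->
  (forall i j, Un_cv (fun m => rpow P m i j) (c j)) ->
  forall j, j \notin A -> c j = R0.
Proof.
move=> Hs E An Hc j Hj.
case/set0Pn: An => i Hi.
apply: (UL_sequence (fun m => rpow P m i j)) => //.
move=> eps Heps; exists 0%nat => m _.
rewrite (@closed_pow n P A (@FP_fix n P A Hs E) m i j Hi Hj).
unfold R_dist; rewrite Rminus_0_r Rabs_R0; exact Heps.
Qed.

Theorem proposition3 (n : nat) (P : rmat n) :
  doubly_stochastic P ->
  (forall i, Rlt R0 (P i i)) ->
  SIA P ->
  sarymsakov P.
Proof.
move=> [Hs _] Hd [_ [c [_ [Hc1 Hc]]]].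
split=> // A A' An A'n Hdis.
case E: (FP P A :&: FP P A' == set0); last by left; exact: negbT.
right; split; first exact/eqP.
rewrite ltnNge; apply/negP => Hle.
have sA := @sub_FP n P A Hd; have sA' := @sub_FP n P A' Hd.
have cA := subset_leq_card sA; have cA' := subset_leq_card sA'.
move: Hle; rewrite !cardsU (eqP E) cards0.
have : #|A :&: A'| = 0.
  apply/eqP; rewrite cards_eq0; apply/eqP; exact/disjoint_setI0.
move=> -> Hle.
have EA : FP P A = A.
  apply/esym/eqP; rewrite eqEcard sA /=; move: Hle; rewrite !subn0 => Hle; rewrite -(leq_add2r #|FP P A'|); apply: (leq_trans Hle); by rewrite leq_add2l.
have EA' : FP P A' = A'.
  apply/esym/eqP; rewrite eqEcard sA' /=; move: Hle; rewrite !subn0 => Hle; rewrite -(leq_add2l #|FP P A|); apply: (leq_trans Hle); by rewrite leq_add2r.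
have Z : forall j, c j = R0.
  move=> j; case Hj: (j \in A).
    apply: (@c_zero n P _ c Hs EA' A'n Hc).
    by move: Hdis; rewrite disjoint_subset => /subsetP /(_ j Hj); rewrite inE.
  exact: (@c_zero n P _ c Hs EA An Hc j (negbT Hj)).
by move: Hc1; rewrite (@rsum0 n c Z); move/esym; apply: R1_neq_R0.
Qed.
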